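(* Let $\eta$ be a loop in parameter space along which the local gap condition holds, and let $\mathcal{E}_{\mathrm{B}}(\eta)\to\mathbb{T}^{d+1}$ be the associated Bloch line bundle. If the north pole variety $\mathcal{N}_\eta$ is empty or the south pole variety $\mathcal{S}_\eta$ is empty, then $\mathcal{E}_{\mathrm{B}}(\eta)$ is trivial.
   Context: Consider a periodic two-band system with two internal degrees of freedom: a continuous map $Q\ni q\mapsto H(\cdot;q)$ with $H(k;q)=h_0(k;q)\mathrm{id}_2+\sum_{j=1}^3h_j(k;q)\sigma_j$, $k\in\mathbb{T}^d$, where the $h_j(\cdot;q)\in C(\mathbb{T}^d)$ are real-valued and $\sigma_1,\sigma_2,\sigma_3$ are the Pauli matrices. Let $|h|(k;q)=(\sum_{j=1}^3h_j(k;q)^2)^{1/2}$. Let $\eta:\mathbb{S}^1\to Q$ be continuous with $|h|(k;\eta(s))>0$ for all $k,s$ (local gap condition), fix $T>0$, and set $h_{\eta,j}(k,t)=h_j(k;\eta(2\pi t/T))$, $|h_\eta|(k,t)=|h|(k;\eta(2\pi t/T))$. The Fermi projection is $P_\eta(k,t)=\frac12\big(\mathrm{id}_2-\sum_{j=1}^3\frac{h_{\eta,j}(k,t)}{|h_\eta|(k,t)}\sigma_j\big)$, and the Bloch line bundle is $\mathcal{E}_{\mathrm{B}}(\eta)=\bigsqcup_{(k,t)\in\mathbb{T}^{d+1}}\mathrm{ran}\,P_\eta(k,t)$. With $\theta_\eta(k,t)=\arccos(h_{\eta,3}(k,t)/|h_\eta|(k,t))\in[0,\pi]$, the north and south pole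 varieties are $\mathcal{N}_\eta=\{(k,t)\in\mathbb{T}^{d+1}:\theta_\eta(k,t)=0\}$ and $\mathcal{S}_\eta=\{(k,t)\in\mathbb{T}^{d+1}:\theta_\eta(k,t)=\pi\}$. *)

(* Defs.v *)
From HB Require Import structures.
From mathcomp Require Import all_boot all_order all_algebra.
From mathcomp Require Import all_classical all_reals all_analysis.
From mathcomp Require Import complex.
Set Implicit Arguments. Unset Strict Implicit. Unset Printing Implicit Defensive.
Import Order.TTheory GRing.Theory Num.Theory.
Import numFieldNormedType.Exports.
Local Open Scope ring_scope.
Local Open Scope classical_set_scope.

(* The Brillouin torus T^d = R^d / (2 pi Z)^d is modelled by functions on
   'rV[R]_d that are invariant under the shifts k |-> k + 2 pi e_i.        *)
Definition kshift {R : realType} {d : nat} (k : 'rV[R]_d) (i : 'I_d) : 'rV[R]_d :=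
  k + (2 * pi) *: delta_mx 0 i.

Definition coeff_fun {R : realType} {d : nat} {Q : topologicalType}
    (h : 'rV[R]_d -> Q -> R) : Prop :=
  continuous (fun p : 'rV[R]_d * Q => h p.1 p.2) /\
  (forall k q i, h (kshift k i) q = h k q).

Definition loop {R : realType} {Q : topologicalType} (eta : R -> Q) : Prop :=
  continuous eta /\ (forall s, eta (s + 2 * pi) = eta s).

Definition hnorm {R : realType} {d : nat} {Q : Type}
    (h1 h2 h3 : 'rV[R]_d -> Q -> R) (k : 'rV[R]_d) (q : Q) : R :=
  Num.sqrt (h1 k q ^+ 2 + h2 k q ^+ 2 + h3 k q ^+ 2).

Definition heta {R : realType} {d : nat} {Q : Type}
    (h : 'rV[R]_d -> Q -> R) (eta : R -> Q) (T : R) (k : 'rV[R]_d) (t : R) : R :=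
  h k (eta (2 * pi * t / T)).

Definition sigma1 {R : realType} : 'M[R[i]]_2 :=
  \matrix_(a < 2, b < 2) (if a == b then 0 else 1).
Definition sigma2 {R : realType} : 'M[R[i]]_2 :=
  \matrix_(a < 2, b < 2)
    (if a == b then 0 else if a == ord0 then - (Complex 0 1) else Complex 0 1).
Definition sigma3 {R : realType} : 'M[R[i]]_2 :=
  \matrix_(a < 2, b < 2)
    (if a == b then (if a == ord0 then 1 else -1) else 0).

Definition toC {R : realType} (x : R) : R[i] := Complex x 0.

Definition fermi_proj {R : realType} {d : nat} {Q : Type}
    (h1 h2 h3 : 'rV[R]_d -> Q -> R) (eta : R -> Q) (T : R)
    (k : 'rV[R]_d) (t : R) : 'M[R[i]]_2 :=
  let n := hnorm h1 h2 h3 k (eta (2 * pi * t / T)) in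
  toC (2^-1) *: (1%:M
    - (toC (heta h1 eta T k t / n) *: sigma1
       + toC (heta h2 eta T k t / n) *: sigma2
       + toC (heta h3 eta T k t / n) *: sigma3)).

Definition in_ran {R : realType} (P : 'M[R[i]]_2) (v : 'cV[R[i]]_2) : Prop :=
  exists w : 'cV[R[i]]_2, v = P *m w.

Definition continuous_C2 {R : realType} {d : nat}
    (psi : 'rV[R]_d * R -> 'cV[R[i]]_2) : Prop :=
  forall a : 'I_2,
    continuous (fun x => Re (psi x a ord0)) /\
    continuous (fun x => Im (psi x a ord0)).

(* The Bloch line bundle E_B(eta) over T^{d+1} = T^d x (R / T Z) is trivial:
   it admits a global frame, i.e. a continuous, nowhere vanishing section
   (k,t) |-> psi(k,t) in ran P_eta(k,t), periodic in k and in t. *)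
Definition bloch_bundle_trivial {R : realType} {d : nat} {Q : Type}
    (h1 h2 h3 : 'rV[R]_d -> Q -> R) (eta : R -> Q) (T : R) : Prop :=
  exists psi : 'rV[R]_d * R -> 'cV[R[i]]_2,
    [/\ continuous_C2 psi,
        forall k t i, psi (kshift k i, t) = psi (k, t),
        forall k t, psi (k, t + T) = psi (k, t),
        forall k t, psi (k, t) != 0 &
        forall k t, in_ran (fermi_proj h1 h2 h3 eta T k t) (psi (k, t))].

Definition theta_eta {R : realType} {d : nat} {Q : Type}
    (h1 h2 h3 : 'rV[R]_d -> Q -> R) (eta : R -> Q) (T : R)
    (k : 'rV[R]_d) (t : R) : R :=
  acos (heta h3 eta T k t / hnorm h1 h2 h3 k (eta (2 * pi * t / T))).

(* North and south pole varieties (as sets of representatives (k,t)). *)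
Definition north_pole {R : realType} {d : nat} {Q : Type}
    (h1 h2 h3 : 'rV[R]_d -> Q -> R) (eta : R -> Q) (T : R) : set ('rV[R]_d * R) :=
  [set x | theta_eta h1 h2 h3 eta T x.1 x.2 = 0].
Definition south_pole {R : realType} {d : nat} {Q : Type}
    (h1 h2 h3 : 'rV[R]_d -> Q -> R) (eta : R -> Q) (T : R) : set ('rV[R]_d * R) :=
  [set x | theta_eta h1 h2 h3 eta T x.1 x.2 = pi].

(* Main.v *)
Require Import Defs.
From HB Require Import structures.
From mathcomp Require Import all_boot all_order all_algebra.
From mathcomp Require Import all_classical all_reals all_analysis.
From mathcomp Require Import complex ring lra.
Import Order.TTheory GRing.Theory Num.Theory.
Import numFieldNormedType.Exports.
Local Open Scope ring_scope.
Local Open Scope classical_set_scope.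

Lemma cont_heta (R : realType) (d : nat) (Q : topologicalType)
  (h : 'rV[R]_d -> Q -> R) (eta : R -> Q) (T : R) :
  coeff_fun h -> loop eta ->
  continuous (fun x : 'rV[R]_d * R => heta h eta T x.1 x.2).
Proof.
move=> [hc _] [ec _] x.
rewrite /heta.
apply: (@continuous2_cvg _ _ _ _ _ _ fst (fun x : 'rV[R]_d * R => eta (2 * pi * x.2 / T)) h).
- exact: (hc (x.1, eta (2 * pi * x.2 / T))).
- exact: cvg_fst.
apply: (@continuous_comp _ _ _ (fun x : 'rV[R]_d * R => 2 * pi * x.2 / T) eta); last exact: ec.
apply: continuousM; last exact: cvg_cst.
apply: continuousM; first exact: cvg_cst.
exact: cvg_snd.
Qed.

Definition Pm {R : realType} (a1 a2 a3 : R) : 'M[R[i]]_2 :=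
  toC (2^-1) *: (1%:M - (toC a1 *: sigma1 + toC a2 *: sigma2 + toC a3 *: sigma3)).

Lemma Pcol0 (R : realType) (a1 a2 a3 : R) :
  Pm a1 a2 a3 *m delta_mx 0 0 =
  \col_(a < 2) (if a == 0 then Complex ((1 - a3) / 2) 0 else Complex (- a1 / 2) (- a2 / 2)).
Proof.
apply/matrixP => i j; rewrite !mxE big_ord_recr big_ord_recr big_ord0 !mxE.
case: i => [[|[|//]] Hi]; rewrite ?ord1 /=.
all: rewrite /toC /=; apply/eqP; rewrite eq_complex /=; apply/andP; split; apply/eqP.
all: try field.
all: by []. Qed.

Lemma Pcol1 (R : realType) (a1 a2 a3 : R) :
  Pm a1 a2 a3 *m delta_mx 1 0 =
  \col_(a < 2) (if a == 0 then Complex (- a1 / 2) (a2 / 2) else Complex ((1 + a3) / 2) 0).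
Proof.
apply/matrixP => i j; rewrite !mxE big_ord_recr big_ord_recr big_ord0 !mxE.
case: i => [[|[|//]] Hi]; rewrite ?ord1 /=.
all: rewrite /toC /=; apply/eqP; rewrite eq_complex /=; apply/andP; split; apply/eqP.
all: try field.
all: by [].
Qed.

Lemma sq_cont (R : realType) (X : topologicalType) (f : X -> R) :
  continuous f -> continuous (fun x => f x ^+ 2).
Proof.
move=> cf x.
have E : (fun x => f x ^+ 2) = (f \* f)%R.
  by apply: boolp.funext => y; rewrite expr2.
rewrite E; exact: (continuousM (cf x) (cf x)).
Qed.

Lemma cont_ext (R : realType) (X : topologicalType) (f g : X -> R) :
  (forall x, f x = g x) -> continuous g -> continuous f.
Proof. by move=> e; have -> : f = g by apply: boolp.funext. Qed.

Lemma div2_cont (R : realType) (X : topologicalType) (f : X -> R) :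
  continuous f -> continuous (fun x => f x / 2).
Proof.
move=> cf x.
exact: (continuousM (t := fun _ => 2^-1) (cf x) (cvg_cst _)).
Qed.

Lemma N_cont (R : realType) (X : topologicalType) (f : X -> R) :
  continuous f -> continuous (fun x => - f x).
Proof. move=> cf x; exact: (continuousN (cf x)). Qed.

Lemma addl_cont (R : realType) (X : topologicalType) (f : X -> R) :
  continuous f -> continuous (fun x => 1 + f x).
Proof. move=> cf x; apply: continuousD; [exact: cvg_cst | exact: cf]. Qed.

Lemma subl_cont (R : realType) (X : topologicalType) (f : X -> R) :
  continuous f -> continuous (fun x => 1 - f x).
Proof. move=> cf; exact: (@addl_cont _ _ _ (@N_cont _ _ _ cf)). Qed.

Lemma cont_hn (R : realType) (d : nat) (Q : topologicalType)
  (h1 h2 h3 : 'rV[R]_d -> Q -> R) (eta : R -> Q) (T : R) :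
  coeff_fun h1 -> coeff_fun h2 -> coeff_fun h3 -> loop eta ->
  continuous (fun x : 'rV[R]_d * R => hnorm h1 h2 h3 x.1 (eta (2 * pi * x.2 / T))).
Proof.
move=> c1 c2 c3 le x; rewrite /hnorm.
apply: (@continuous_comp _ _ _ (fun x : 'rV[R]_d * R =>
   heta h1 eta T x.1 x.2 ^+ 2 + heta h2 eta T x.1 x.2 ^+ 2 + heta h3 eta T x.1 x.2 ^+ 2)
   Num.sqrt); last exact: sqrt_continuous.
apply: continuousD; first apply: continuousD.
all: apply: sq_cont; exact: cont_heta.
Qed.

Lemma cont_n (R : realType) (d : nat) (Q : topologicalType)
  (h1 h2 h3 h : 'rV[R]_d -> Q -> R) (eta : R -> Q) (T : R) :
  coeff_fun h1 -> coeff_fun h2 -> coeff_fun h3 -> coeff_fun h -> loop eta ->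
  (forall k s, 0 < hnorm h1 h2 h3 k (eta s)) ->
  continuous (fun x : 'rV[R]_d * R =>
    heta h eta T x.1 x.2 / hnorm h1 h2 h3 x.1 (eta (2 * pi * x.2 / T))).
Proof.
move=> c1 c2 c3 c le pos x.
have A := @cont_heta _ _ _ _ _ T c le x.
have B := @cont_hn _ _ _ _ _ _ _ T c1 c2 c3 le x.
have B' := continuousV (s := fun x : 'rV[R]_d * R => hnorm h1 h2 h3 x.1 (eta (2 * pi * x.2 / T))) (negbT (gt_eqF (pos _ _))) B.
exact: (continuousM A B').
Qed.

Lemma ReC (R : realType) (a b : R) : 'Re (Complex a b) = a%:C%C.
Proof. by rewrite -complexRe. Qed.
Lemma ImC (R : realType) (a b : R) : 'Im (Complex a b) = b%:C%C.
Proof. by rewrite -complexIm. Qed.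
Lemma contRe (R : realType) (X : topologicalType) (g h : X -> R) :
  continuous g -> continuous (fun x => 'Re (Complex (g x) (h x) : R[i])).
Proof.
move=> cg.
have -> : (fun x => 'Re (Complex (g x) (h x) : R[i])) = (fun x => (g x)%:C%C).
  by apply: boolp.funext => y; rewrite ReC.
move=> x; apply/cvgrPdist_lt => e e0.
move: (e0); rewrite ltcE /= => /andP[/eqP Ie Re0].
have := cg x; move/cvgrPdist_lt/(_ _ Re0).
apply: filterS => t ht.
rewrite -rmorphB normc_def /= expr0n /= addr0 sqrtr_sqr ltcE /= -Ie eqxx /=.
exact: ht.
Qed.
Lemma contIm (R : realType) (X : topologicalType) (g h : X -> R) :
  continuous h -> continuous (fun x => 'Im (Complex (g x) (h x) : R[i])).
Proof.
move=> cg.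
have -> : (fun x => 'Im (Complex (g x) (h x) : R[i])) = (fun x => (h x)%:C%C).
  by apply: boolp.funext => y; rewrite ImC.
move=> x; apply/cvgrPdist_lt => e e0.
move: (e0); rewrite ltcE /= => /andP[/eqP Ie Re0].
have := cg x; move/cvgrPdist_lt/(_ _ Re0).
apply: filterS => t ht.
rewrite -rmorphB normc_def /= expr0n /= addr0 sqrtr_sqr ltcE /= -Ie eqxx /=.
exact: ht.
Qed.

Lemma contRe_col (R : realType) (X : topologicalType) (re im : 'I_2 -> X -> R) (a : 'I_2) :
  continuous (re a) ->
  continuous (fun x => 'Re ((\col_(b < 2) (Complex (re b x) (im b x) : R[i])) a ord0)).
Proof.
move=> c.
have -> : (fun x => 'Re ((\col_(b < 2) (Complex (re b x) (im b x) : R[i])) a ord0)) =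
          (fun x => 'Re (Complex (re a x) (im a x) : R[i])).
  by apply: boolp.funext => y; rewrite mxE.
exact: contRe.
Qed.

Lemma contIm_col (R : realType) (X : topologicalType) (re im : 'I_2 -> X -> R) (a : 'I_2) :
  continuous (im a) ->
  continuous (fun x => 'Im ((\col_(b < 2) (Complex (re b x) (im b x) : R[i])) a ord0)).
Proof.
move=> c.
have -> : (fun x => 'Im ((\col_(b < 2) (Complex (re b x) (im b x) : R[i])) a ord0)) =
          (fun x => 'Im (Complex (re a x) (im a x) : R[i])).
  by apply: boolp.funext => y; rewrite mxE.
exact: contIm.
Qed.

Theorem theorem4p2 (R : realType) (d : nat) (Q : topologicalType)
    (h0 h1 h2 h3 : 'rV[R]_d -> Q -> R) (eta : R -> Q) (T : R) :
  coeff_fun h0 -> coeff_fun h1 -> coeff_fun h2 -> coeff_fun h3 ->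
  loop eta ->
  (forall k s, 0 < hnorm h1 h2 h3 k (eta s)) ->
  0 < T ->
  north_pole h1 h2 h3 eta T = set0 \/ south_pole h1 h2 h3 eta T = set0 ->
  bloch_bundle_trivial h1 h2 h3 eta T.
Proof.
move=> _ c1 c2 c3 le pos Tpos Hpole.
pose n (h : 'rV[R]_d -> Q -> R) (x : 'rV[R]_d * R) :=
  heta h eta T x.1 x.2 / hnorm h1 h2 h3 x.1 (eta (2 * pi * x.2 / T)).
have cn : forall h, coeff_fun h -> continuous (n h).
  by move=> h ch; apply: cont_n.
have nsh : forall h, coeff_fun h -> forall k t i, n h (kshift k i, t) = n h (k, t).
  move=> h [_ ch] k t i; rewrite /n /heta /hnorm /=.
  by rewrite ch; case: c1 => _ ->; case: c2 => _ ->; case: c3 => _ ->.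
have nT : forall h, forall k t, n h (k, t + T) = n h (k, t).
  move=> h k t; rewrite /n /heta /=.
  have -> : 2 * pi * (t + T) / T = 2 * pi * t / T + 2 * pi.
    by field; rewrite gt_eqF.
  by case: le => _ ->.
have FP : forall k t, fermi_proj h1 h2 h3 eta T k t = Pm (n h1 (k, t)) (n h2 (k, t)) (n h3 (k, t)).
  by [].
case: Hpole => Hpole.
- pose re (b : 'I_2) (x : 'rV[R]_d * R) := if val b == 0%N then (1 - n h3 x) / 2 else - n h1 x / 2.
  pose im (b : 'I_2) (x : 'rV[R]_d * R) := if val b == 0%N then 0 else - n h2 x / 2.
  exists (fun x => \col_(b < 2) (Complex (re b x) (im b x) : R[i])).
  split.
  { move=> a; split; [apply: contRe_col | apply: contIm_col].
    all: case: a => [[|[|//]] Ha]; rewrite /re /im /=.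
    all: try exact: cst_continuous.
    all: apply: div2_cont.
    all: try (apply: N_cont; exact: cn).
    all: try (apply: subl_cont; exact: cn). }
  { by move=> k t i; rewrite /re /im !nsh. }
  { by move=> k t; rewrite /re /im !nT. }
  { move=> k t; apply/negP => /eqP /matrixP /(_ 0 0); rewrite !mxE /re /=.
    move/(congr1 (fun z : R[i] => complex.Re z)) => /=.
    move/eqP; rewrite mulf_eq0 invr_eq0 pnatr_eq0 orbF subr_eq0 => /eqP h31.
    have : north_pole h1 h2 h3 eta T (k, t).
      by rewrite /north_pole /theta_eta /=; rewrite -[X in acos X]h31 acos1.
    by rewrite Hpole. }
  { move=> k t; exists (delta_mx 0 0); rewrite FP Pcol0.
    by apply/matrixP => a b; rewrite !mxE /re /im; case: a => [[|[|//]] Ha]. }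
- pose re (b : 'I_2) (x : 'rV[R]_d * R) := if val b == 0%N then - n h1 x / 2 else (1 + n h3 x) / 2.
  pose im (b : 'I_2) (x : 'rV[R]_d * R) := if val b == 0%N then n h2 x / 2 else 0.
  exists (fun x => \col_(b < 2) (Complex (re b x) (im b x) : R[i])).
  split.
  { move=> a; split; [apply: contRe_col | apply: contIm_col].
    all: case: a => [[|[|//]] Ha]; rewrite /re /im /=.
    all: try exact: cst_continuous.
    all: apply: div2_cont.
    all: try (apply: N_cont; exact: cn).
    all: try exact: cn.
    all: try (apply: addl_cont; exact: cn). }
  { by move=> k t i; rewrite /re /im !nsh. }
  { by move=> k t; rewrite /re /im !nT. }
  { move=> k t; apply/negP => /eqP /matrixP /(_ 1 0); rewrite !mxE /re /=.
    move/(congr1 (fun z : R[i] => complex.Re z)) => /=.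
    move/eqP; rewrite mulf_eq0 invr_eq0 pnatr_eq0 orbF addr_eq0 => /eqP h31.
    have : south_pole h1 h2 h3 eta T (k, t).
      have e : n h3 (k, t) = -1 by rewrite -[n h3 (k, t)]opprK -h31.
      by rewrite /south_pole /theta_eta /=; move: e; rewrite /n /= => ->; exact: acosN1.
    by rewrite Hpole. }
  { move=> k t; exists (delta_mx 1 0); rewrite FP Pcol1.
    by apply/matrixP => a b; rewrite !mxE /re /im; case: a => [[|[|//]] Ha]. }
Qed.
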